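(* Let $\mathcal{A}$ be a Hopf algebra over $\mathbb{C}$ whose antipode $S$ satisfies $S^2=\mathrm{id}$, let $\Pi_\phi$ be a representation of $\mathcal{A}$ on $V$ and $|\phi_r\rangle\in V$. Define $\mathcal{T}_r=\{a\in\mathcal{A}:(\mathrm{id}\otimes\Pi_\phi)\Delta(a)(1\otimes|\phi_r\rangle)=a\otimes|\phi_r\rangle\}$ and $\mathcal{T}_l=\{a\in\mathcal{A}:(\Pi_\phi\otimes\mathrm{id})\Delta(a)(|\phi_r\rangle\otimes1)=|\phi_r\rangle\otimes a\}$. Then $S(\mathcal{T}_l)=\mathcal{T}_r$ and $S(\mathcal{T}_r)=\mathcal{T}_l$.
   Context: With $\Delta(a)=\sum a^{(1)}\otimes a^{(2)}$, $(\mathrm{id}\otimes\Pi_\phi)\Delta(a)(1\otimes|\phi_r\rangle)=\sum a^{(1)}\otimes\Pi_\phi(a^{(2)})|\phi_r\rangle\in\mathcal{A}\otimes V$ and $(\Pi_\phi\otimes\mathrm{id})\Delta(a)(|\phi_r\rangle\otimes1)=\sum \Pi_\phi(a^{(1)})|\phi_r\rangle\otimes a^{(2)}\in V\otimes\mathcal{A}$. *)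

(* Defs.v *)
From mathcomp Require Import all_boot all_algebra.
From mathcomp Require Import complex.
From mathcomp Require Import Rstruct.
Set Implicit Arguments. Unset Strict Implicit. Unset Printing Implicit Defensive.
Import GRing.Theory.
Local Open Scope ring_scope.

Definition Cx : fieldType := Rdefinitions.R[i].

(* An element of U (x) V is
   represented by a finite list of pure tensors [(u_1,v_1); ...], standing
   for sum_i u_i (x) v_i.  Two representatives denote the same tensor iff
   they agree under every bilinear map (universal property of U (x) V). *)
Definition bilinear_map (K : fieldType) (U V W : lmodType K)
  (B : U -> V -> W) : Prop :=
  (forall (k : K) u1 u2 v, B (k *: u1 + u2) v = k *: B u1 v + B u2 v) /\
  (forall (k : K) u v1 v2, B u (k *: v1 + v2) = k *: B u v1 + B u v2).

Definition tensor_eq (K : fieldType) (U V : lmodType K)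
  (s t : seq (U * V)) : Prop :=
  forall (W : lmodType K) (B : U -> V -> W), bilinear_map B ->
    \sum_(x <- s) B x.1 x.2 = \sum_(x <- t) B x.1 x.2.

(* Triple tensors U (x) V (x) X, same convention with trilinear maps. *)
Definition trilinear_map (K : fieldType) (U V X W : lmodType K)
  (B : U -> V -> X -> W) : Prop :=
  (forall (k : K) u1 u2 v x, B (k *: u1 + u2) v x = k *: B u1 v x + B u2 v x) /\
  (forall (k : K) u v1 v2 x, B u (k *: v1 + v2) x = k *: B u v1 x + B u v2 x) /\
  (forall (k : K) u v x1 x2, B u v (k *: x1 + x2) = k *: B u v x1 + B u v x2).

Definition tensor3_eq (K : fieldType) (U V X : lmodType K)
  (s t : seq (U * V * X)) : Prop :=
  forall (W : lmodType K) (B : U -> V -> X -> W), trilinear_map B ->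
    \sum_(x <- s) B x.1.1 x.1.2 x.2 = \sum_(x <- t) B x.1.1 x.1.2 x.2.

(* Hopf algebra structure (A, Delta, eps, S) on an algebra A over K.
   Delta a is a representative of the coproduct Delta(a) in A (x) A
   (Sweedler: Delta a = sum a(1) (x) a(2)). *)
Record is_hopf (K : fieldType) (A : algType K)
  (Delta : A -> seq (A * A)) (eps : A -> K) (S : A -> A) : Prop := {
  hopf_Delta_linear : forall (k : K) (a b : A),
    tensor_eq (Delta (k *: a + b))
              ([seq (k *: x.1, x.2) | x <- Delta a] ++ Delta b);
  hopf_Delta_mul : forall a b : A,
    tensor_eq (Delta (a * b))
              [seq (x.1 * y.1, x.2 * y.2) | x <- Delta a, y <- Delta b];
  hopf_Delta_one : tensor_eq (Delta 1) [:: (1, 1)];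
  hopf_coassoc : forall a : A,
    tensor3_eq [seq (y.1, y.2, x.2) | x <- Delta a, y <- Delta x.1]
               [seq (x.1, y.1, y.2) | x <- Delta a, y <- Delta x.2];
  hopf_eps_linear : forall (k : K) (a b : A), eps (k *: a + b) = k * eps a + eps b;
  hopf_eps_mul : forall a b : A, eps (a * b) = eps a * eps b;
  hopf_eps_one : eps 1 = 1;
  hopf_counit_l : forall a : A, \sum_(x <- Delta a) eps x.1 *: x.2 = a;
  hopf_counit_r : forall a : A, \sum_(x <- Delta a) eps x.2 *: x.1 = a;
  hopf_S_linear : forall (k : K) (a b : A), S (k *: a + b) = k *: S a + S b;
  hopf_antipode_l : forall a : A, \sum_(x <- Delta a) S x.1 * x.2 = eps a *: 1;
  hopf_antipode_r : forall a : A, \sum_(x <- Delta a) x.1 * S x.2 = eps a *: 1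
}.

Record is_representation (K : fieldType) (A : algType K) (V : lmodType K)
  (Pi : A -> V -> V) : Prop := {
  rep_linear_op : forall (a : A) (k : K) (v w : V),
    Pi a (k *: v + w) = k *: Pi a v + Pi a w;
  rep_linear_alg : forall (k : K) (a b : A) (v : V),
    Pi (k *: a + b) v = k *: Pi a v + Pi b v;
  rep_mul : forall (a b : A) (v : V), Pi (a * b) v = Pi a (Pi b v);
  rep_one : forall v : V, Pi 1 v = v
}.

Definition T_r (K : fieldType) (A : algType K) (V : lmodType K)
  (Delta : A -> seq (A * A)) (Pi : A -> V -> V) (phi : V) (a : A) : Prop :=
  tensor_eq [seq (x.1, Pi x.2 phi) | x <- Delta a] [:: (a, phi)].

Definition T_l (K : fieldType) (A : algType K) (V : lmodType K)
  (Delta : A -> seq (A * A)) (Pi : A -> V -> V) (phi : V) (a : A) : Prop :=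
  tensor_eq [seq (Pi x.1 phi, x.2) | x <- Delta a] [:: (phi, a)].

Definition image_set (A B : Type) (f : A -> B) (P : A -> Prop) : B -> Prop :=
  fun b => exists2 a, P a & f a = b.

(* Main.v *)
Require Import Defs.
From mathcomp Require Import all_boot all_algebra.
From mathcomp Require Import complex.
From mathcomp Require Import Rstruct.
Set Implicit Arguments. Unset Strict Implicit. Unset Printing Implicit Defensive.
Import GRing.Theory.
Local Open Scope ring_scope.

Section Lin.
Variable K : fieldType.

Definition lin (U W : lmodType K) (f : U -> W) :=
  forall (k : K) u v, f (k *: u + v) = k *: f u + f v.

Lemma lin0 (U W : lmodType K) (f : U -> W) : lin f -> f 0 = 0.
Proof.
move=> h; have := h 1 0 0; rewrite scaler0 addr0 scale1r => e.
by apply: (addrI (f 0)); rewrite addr0 -e.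
Qed.

Lemma linZ (U W : lmodType K) (f : U -> W) : lin f -> forall k u, f (k *: u) = k *: f u.
Proof. by move=> h k u; have := h k u 0; rewrite !addr0 (lin0 h) addr0. Qed.

Lemma linD (U W : lmodType K) (f : U -> W) : lin f -> forall u v, f (u + v) = f u + f v.
Proof. by move=> h u v; have := h 1 u v; rewrite !scale1r. Qed.

Lemma lin_sum (U W : lmodType K) (f : U -> W) : lin f ->
  forall I (r : seq I) (F : I -> U), f (\sum_(i <- r) F i) = \sum_(i <- r) f (F i).
Proof.
move=> h I r F; elim: r => [|i r IH]; first by rewrite !big_nil (lin0 h).
by rewrite !big_cons (linD h) IH.
Qed.

Lemma lin_sumf (U W : lmodType K) I (r : seq I) (F : I -> U -> W) :
  (forall i, lin (F i)) -> lin (fun u => \sum_(i <- r) F i u).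
Proof.
move=> h k u v; rewrite scaler_sumr -big_split /=; apply: eq_bigr => i _; exact: h.
Qed.

Lemma bilinP (U V W : lmodType K) (B : U -> V -> W) :
  (forall v, lin (B^~ v)) -> (forall u, lin (B u)) -> bilinear_map B.
Proof. by move=> h1 h2; split=> *; [apply: h1 | apply: h2]. Qed.

Lemma bil1 (U V W : lmodType K) (B : U -> V -> W) : bilinear_map B -> forall v, lin (B^~ v).
Proof. by case=> h1 h2 v k u1 u2; apply: h1. Qed.

Lemma bil2 (U V W : lmodType K) (B : U -> V -> W) : bilinear_map B -> forall u, lin (B u).
Proof. by case=> h1 h2 u k u1 u2; apply: h2. Qed.

Lemma trilinP (U V X W : lmodType K) (B : U -> V -> X -> W) :
  (forall v x, lin (fun u => B u v x)) -> (forall u x, lin (fun v => B u v x)) ->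
  (forall u v, lin (B u v)) -> trilinear_map B.
Proof. by move=> h1 h2 h3; split; [|split]=> *; [apply: h1|apply: h2|apply: h3]. Qed.

Lemma tri1 (U V X W : lmodType K) (B : U -> V -> X -> W) : trilinear_map B ->
  forall v x, lin (fun u => B u v x).
Proof. by case=> h1 _ v x k u1 u2; apply: h1. Qed.

Lemma tri2 (U V X W : lmodType K) (B : U -> V -> X -> W) : trilinear_map B ->
  forall u x, lin (fun v => B u v x).
Proof. by case=> _ [h2 _] u x k u1 u2; apply: h2. Qed.

Lemma tri3 (U V X W : lmodType K) (B : U -> V -> X -> W) : trilinear_map B ->
  forall u v, lin (B u v).
Proof. by case=> _ [_ h3] u v k u1 u2; apply: h3. Qed.

End Lin.

Section Hopf.
Variable K : fieldType.
Variables (A : algType K) (Delta : A -> seq (A * A)) (eps : A -> K) (S : A -> A).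
Hypothesis H : is_hopf Delta eps S.

Definition D (W : lmodType K) (f : A -> A -> W) (a : A) :=
  \sum_(x <- Delta a) f x.1 x.2.

Lemma D_lin (W : lmodType K) (f : A -> A -> W) : bilinear_map f -> lin (D f).
Proof.
move=> hf k a b; rewrite /D (hopf_Delta_linear H k a b hf) big_cat /= big_map.
rewrite scaler_sumr; congr (_ + _); apply: eq_bigr => x _ /=.
exact: (linZ (bil1 hf x.2)).
Qed.

Lemma D_one (W : lmodType K) (f : A -> A -> W) : bilinear_map f -> D f 1 = f 1 1.
Proof. by move=> hf; rewrite /D (hopf_Delta_one H hf) big_seq1. Qed.

Lemma D_mul (W : lmodType K) (f : A -> A -> W) : bilinear_map f -> forall p q,
  D f (p * q) = \sum_(x <- Delta p) \sum_(y <- Delta q) f (x.1 * y.1) (x.2 * y.2).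
Proof. by move=> hf p q; rewrite /D (hopf_Delta_mul H p q hf) big_allpairs_dep. Qed.

Lemma coassoc_sum (W : lmodType K) (g : A -> A -> A -> W) : trilinear_map g -> forall a,
  \sum_(x <- Delta a) \sum_(y <- Delta x.1) g y.1 y.2 x.2 =
  \sum_(x <- Delta a) \sum_(y <- Delta x.2) g x.1 y.1 y.2.
Proof.
move=> hg a; have := hopf_coassoc H a hg.
by rewrite !big_allpairs_dep.
Qed.

Lemma S_lin : lin S.
Proof. exact: hopf_S_linear H. Qed.

Lemma lin_mulr (c : A) : lin (fun x : A => x * c).
Proof. by move=> k u v; rewrite mulrDl scalerAl. Qed.

Lemma lin_mull (c : A) : lin (fun x : A => c * x).
Proof. by move=> k u v; rewrite mulrDr scalerAr. Qed.

Lemma lin_comp (U V W : lmodType K) (f : V -> W) (g : U -> V) :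
  lin f -> lin g -> lin (fun x => f (g x)).
Proof. by move=> hf hg k u v; rewrite hg hf. Qed.

Lemma eps_sum I (r : seq I) (F : I -> A) : eps (\sum_(i <- r) F i) = \sum_(i <- r) eps (F i).
Proof.
have e0 : eps 0 = 0.
  have := hopf_eps_linear H 1 0 0; rewrite scaler0 addr0 mul1r => e.
  by apply: (addrI (eps 0)); rewrite addr0 -e.
elim: r => [|i r IH]; first by rewrite !big_nil.
rewrite !big_cons -IH.
by have := hopf_eps_linear H 1 (F i) (\sum_(j <- r) F j); rewrite scale1r mul1r.
Qed.


Lemma conv_DS (W : lmodType K) (C : A -> A -> W) : bilinear_map C -> forall a,
  \sum_(x <- Delta a) \sum_(u <- Delta x.1) \sum_(v <- Delta (S x.2))
     C (u.1 * v.1) (u.2 * v.2) = eps a *: C 1 1.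
Proof.
move=> hC a.
transitivity (\sum_(x <- Delta a) D C (x.1 * S x.2)).
  by apply: eq_bigr => x _; rewrite (D_mul hC).
by rewrite -(lin_sum (D_lin hC)) (hopf_antipode_r H) (linZ (D_lin hC)) (D_one hC).
Qed.

Lemma conv_nuD (W : lmodType K) (C : A -> A -> W) : bilinear_map C -> forall a,
  \sum_(x <- Delta a) \sum_(y <- Delta x.1) \sum_(v <- Delta x.2)
     C (S y.2 * v.1) (S y.1 * v.2) = eps a *: C 1 1.
Proof.
move=> hC a.
pose g p q r := \sum_(v <- Delta r) C (S q * v.1) (S p * v.2).
have hg : trilinear_map g.
  apply: trilinP => [q r|p r|p q].
  - apply: lin_sumf => v; apply: (lin_comp (bil2 hC _)); apply: (lin_comp (lin_mulr _)); exact: S_lin.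
  - apply: lin_sumf => v; apply: (lin_comp (bil1 hC _)); apply: (lin_comp (lin_mulr _)); exact: S_lin.
  - apply: (D_lin (f := fun s t => C (S q * s) (S p * t))); apply: bilinP => [t|s].
    + apply: (lin_comp (bil1 hC _)); exact: lin_mull.
    + apply: (lin_comp (bil2 hC _)); exact: lin_mull.
have := coassoc_sum hg a; rewrite /g => ->.
transitivity (\sum_(x <- Delta a) C 1 (S x.1 * x.2)); last first.
  by rewrite -(lin_sum (bil2 hC 1)) (hopf_antipode_l H) (linZ (bil2 hC 1)).
apply: eq_bigr => x _.
pose h p q r := C (S p * q) (S x.1 * r).
have hh : trilinear_map h.
  apply: trilinP => [q r|p r|p q].
  - apply: (lin_comp (bil1 hC _)); apply: (lin_comp (lin_mulr _)); exact: S_lin.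
  - apply: (lin_comp (bil1 hC _)); exact: lin_mull.
  - apply: (lin_comp (bil2 hC _)); exact: lin_mull.
have := coassoc_sum hh x.2; rewrite /h => <-.
transitivity (\sum_(y <- Delta x.2) eps y.1 *: C 1 (S x.1 * y.2)).
  apply: eq_bigr => y _.
  by rewrite -(lin_sum (bil1 hC _)) (hopf_antipode_l H) (linZ (bil1 hC _)).
rewrite -[in RHS](hopf_counit_l H x.2) mulr_sumr (lin_sum (bil2 hC 1)).
by apply: eq_bigr => y _; rewrite -scalerAr (linZ (bil2 hC 1)).
Qed.

Lemma antico (W : lmodType K) (C : A -> A -> W) : bilinear_map C -> forall a,
  D C (S a) = \sum_(y <- Delta a) C (S y.2) (S y.1).
Proof.
move=> hC a.
have hQb : bilinear_map (fun s t => C (S t) (S s)).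
  apply: bilinP => [t|s].
  - apply: (lin_comp (bil2 hC _)); exact: S_lin.
  - apply: (lin_comp (bil1 hC _)); exact: S_lin.
pose Q := D (fun s t => C (S t) (S s)).
have hQ : lin Q := D_lin hQb.
have -> : \sum_(y <- Delta a) C (S y.2) (S y.1) = Q a by [].
have -> : Q a = Q (\sum_(x <- Delta a) eps x.2 *: x.1) by rewrite (hopf_counit_r H).
symmetry; rewrite (lin_sum hQ).
pose g p q r := \sum_(u <- Delta q) \sum_(v <- Delta (S r)) \sum_(y <- Delta p)
    C (S y.2 * (u.1 * v.1)) (S y.1 * (u.2 * v.2)).
transitivity (\sum_(x <- Delta a) \sum_(z <- Delta x.2) g x.1 z.1 z.2).
  apply: eq_bigr => x _.
  pose C' s t := \sum_(y <- Delta x.1) C (S y.2 * s) (S y.1 * t).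
  have hC' : bilinear_map C'.
    apply: bilinP => [t|s]; apply: lin_sumf => y.
    - apply: (lin_comp (bil1 hC _)); exact: lin_mull.
    - apply: (lin_comp (bil2 hC _)); exact: lin_mull.
  have e : Q x.1 = C' 1 1 by apply: eq_bigr => y _; rewrite !mulr1.
  by rewrite (linZ hQ) e -(conv_DS hC').
have hg : trilinear_map g.
  apply: trilinP => [q r|p r|p q].
  - apply: lin_sumf => u; apply: lin_sumf => v.
    apply: (D_lin (f := fun s t => C (S t * (u.1 * v.1)) (S s * (u.2 * v.2)))).
    apply: bilinP => [t|s].
    + apply: (lin_comp (bil2 hC _)); apply: (lin_comp (lin_mulr _)); exact: S_lin.
    + apply: (lin_comp (bil1 hC _)); apply: (lin_comp (lin_mulr _)); exact: S_lin.
  - apply: (D_lin (f := fun s t => \sum_(v <- Delta (S r)) \sum_(y <- Delta p)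
                 C (S y.2 * (s * v.1)) (S y.1 * (t * v.2)))).
    apply: bilinP => [t|s]; apply: lin_sumf => v; apply: lin_sumf => y.
    + apply: (lin_comp (bil1 hC _)); apply: (lin_comp (lin_mull _)); exact: lin_mulr.
    + apply: (lin_comp (bil2 hC _)); apply: (lin_comp (lin_mull _)); exact: lin_mulr.
  - apply: lin_sumf => u.
    apply: (lin_comp (D_lin (f := fun s t => \sum_(y <- Delta p)
                 C (S y.2 * (u.1 * s)) (S y.1 * (u.2 * t))) _) S_lin).
    apply: bilinP => [t|s]; apply: lin_sumf => y.
    + apply: (lin_comp (bil1 hC _)); apply: (lin_comp (lin_mull _)); exact: lin_mull.
    + apply: (lin_comp (bil2 hC _)); apply: (lin_comp (lin_mull _)); exact: lin_mull.
rewrite -(coassoc_sum hg a).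
have -> : D C (S a) = D C (S (\sum_(x <- Delta a) eps x.1 *: x.2)) by rewrite (hopf_counit_l H).
have hDS : lin (fun b => D C (S b)) := lin_comp (D_lin hC) S_lin.
rewrite (lin_sum hDS); apply: eq_bigr => x _; rewrite (linZ hDS) /g.
under eq_bigr => z _ do rewrite exchange_big.
rewrite exchange_big /D scaler_sumr; apply: eq_bigr => v _.
pose C'' s t := C (s * v.1) (t * v.2).
have hC'' : bilinear_map C''.
  apply: bilinP => [t|s].
  - apply: (lin_comp (bil1 hC _)); exact: lin_mulr.
  - apply: (lin_comp (bil2 hC _)); exact: lin_mulr.
have := conv_nuD hC'' x.1; rewrite /C'' !mul1r => <-.
apply: eq_bigr => z _; rewrite exchange_big; apply: eq_bigr => y _.
by apply: eq_bigr => u _; rewrite !mulrA.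
Qed.

Lemma eps0 : eps 0 = 0.
Proof.
have := hopf_eps_linear H 1 0 0; rewrite scaler0 addr0 mul1r => e.
by apply: (addrI (eps 0)); rewrite addr0 -e.
Qed.

Lemma epsZ k u : eps (k *: u) = k * eps u.
Proof. by have := hopf_eps_linear H k u 0; rewrite !addr0 eps0 addr0. Qed.

Lemma eps_S a : eps (S a) = eps a.
Proof.
transitivity (eps (S (\sum_(x <- Delta a) eps x.2 *: x.1))); first by rewrite (hopf_counit_r H).
rewrite (lin_sum S_lin) eps_sum.
transitivity (eps (\sum_(x <- Delta a) S x.1 * x.2)).
  rewrite eps_sum; apply: eq_bigr => x _.
  by rewrite (linZ S_lin) epsZ (hopf_eps_mul H) mulrC.
by rewrite (hopf_antipode_l H) epsZ (hopf_eps_one H) mulr1.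
Qed.

Lemma twisted (hSS : forall a, S (S a) = a) c :
  \sum_(y <- Delta c) S y.2 * y.1 = eps c *: 1.
Proof.
have hC : bilinear_map (fun u w : A => u * S w).
  apply: bilinP => [w|u]; first exact: lin_mulr.
  apply: (lin_comp (lin_mull u)); exact: S_lin.
have := antico hC c; rewrite /D (hopf_antipode_r H) eps_S => ->.
by apply: eq_bigr => y _; rewrite hSS.
Qed.

Section Rep.
Variables (V : lmodType K) (Pi : A -> V -> V) (phi : V).
Hypothesis hPi : is_representation Pi.

Lemma linPi_alg v : lin (fun a => Pi a v).
Proof. by move=> k u w; apply: (rep_linear_alg hPi). Qed.

Lemma linPi_op a : lin (Pi a).
Proof. by move=> k u w; apply: (rep_linear_op hPi). Qed.

Lemma Tl_expand a : T_l Delta Pi phi a -> forall (W : lmodType K) (g : V -> A -> A -> W),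
  trilinear_map g ->
  \sum_(x <- Delta a) \sum_(y <- Delta x.1) g (Pi y.1 phi) y.2 x.2 =
  \sum_(y <- Delta a) g phi y.1 y.2.
Proof.
move=> hT W g hg.
have hg' : trilinear_map (fun p q r => g (Pi p phi) q r).
  apply: trilinP => [q r|p r|p q].
  - apply: (lin_comp (tri1 hg q r)); exact: linPi_alg.
  - exact: (tri2 hg (Pi p phi) r).
  - exact: (tri3 hg (Pi p phi) q).
rewrite (coassoc_sum hg').
pose B' v w := \sum_(y <- Delta w) g v y.1 y.2.
have hB' : bilinear_map B'.
  apply: bilinP => [w|v]; first by apply: lin_sumf => y; exact: (tri1 hg y.1 y.2).
  apply: (D_lin (f := fun s t => g v s t)).
  apply: bilinP => [t|s]; [exact: (tri2 hg v t) | exact: (tri3 hg v s)].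
by have := hT W B' hB'; rewrite big_map big_seq1.
Qed.

Lemma Tr_expand a : T_r Delta Pi phi a -> forall (W : lmodType K) (g : A -> A -> V -> W),
  trilinear_map g ->
  \sum_(x <- Delta a) \sum_(y <- Delta x.2) g x.1 y.1 (Pi y.2 phi) =
  \sum_(y <- Delta a) g y.1 y.2 phi.
Proof.
move=> hT W g hg.
have hg' : trilinear_map (fun p q r => g p q (Pi r phi)).
  apply: trilinP => [q r|p r|p q].
  - exact: (tri1 hg q (Pi r phi)).
  - exact: (tri2 hg p (Pi r phi)).
  - apply: (lin_comp (tri3 hg p q)); exact: linPi_alg.
rewrite -(coassoc_sum hg').
pose B' u v := \sum_(y <- Delta u) g y.1 y.2 v.
have hB' : bilinear_map B'.
  apply: bilinP => [v|u]; last by apply: lin_sumf => y; exact: (tri3 hg y.1 y.2).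
  apply: (D_lin (f := fun s t => g s t v)).
  apply: bilinP => [t|s]; [exact: (tri1 hg t v) | exact: (tri2 hg s v)].
by have := hT W B' hB'; rewrite big_map big_seq1.
Qed.

Lemma Tl_Tr (hSS : forall a, S (S a) = a) a :
  T_l Delta Pi phi a -> T_r Delta Pi phi (S a).
Proof.
move=> hT W B hB; rewrite big_map big_seq1 /=.
have hC : bilinear_map (fun u w => B u (Pi w phi)).
  apply: bilinP => [w|u]; first exact: (bil1 hB (Pi w phi)).
  apply: (lin_comp (bil2 hB u)); exact: linPi_alg.
have := antico hC a; rewrite /D => ->.
pose g v q r := B (S r) (Pi (S q) v).
have hg : trilinear_map g.
  apply: trilinP => [q r|p r|p q].
  - apply: (lin_comp (bil2 hB _)); exact: linPi_op.
  - apply: (lin_comp (bil2 hB _)); apply: (lin_comp (linPi_alg p)); exact: S_lin.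
  - apply: (lin_comp (bil1 hB _)); exact: S_lin.
have := Tl_expand hT hg; rewrite /g => <-.
rewrite -[in RHS](hopf_counit_l H a) (lin_sum (lin_comp (bil1 hB phi) S_lin)).
apply: eq_bigr => x _.
transitivity (B (S x.2) (Pi (\sum_(y <- Delta x.1) S y.2 * y.1) phi)).
  rewrite (lin_sum (lin_comp (bil2 hB (S x.2)) (linPi_alg phi))).
  by apply: eq_bigr => y _; rewrite (rep_mul hPi).
rewrite (twisted hSS) (linZ (linPi_alg phi)) (rep_one hPi) (linZ (bil2 hB _)).
by rewrite (linZ S_lin) (linZ (bil1 hB _)).
Qed.

Lemma Tr_Tl a : T_r Delta Pi phi a -> T_l Delta Pi phi (S a).
Proof.
move=> hT W B hB; rewrite big_map big_seq1 /=.
have hC : bilinear_map (fun u w => B (Pi u phi) w).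
  apply: bilinP => [w|u]; last exact: (bil2 hB (Pi u phi)).
  apply: (lin_comp (bil1 hB w)); exact: linPi_alg.
have := antico hC a; rewrite /D => ->.
pose g p q v := B (Pi (S q) v) (S p).
have hg : trilinear_map g.
  apply: trilinP => [q r|p r|p q].
  - apply: (lin_comp (bil2 hB _)); exact: S_lin.
  - apply: (lin_comp (bil1 hB _)); apply: (lin_comp (linPi_alg r)); exact: S_lin.
  - apply: (lin_comp (bil1 hB _)); exact: linPi_op.
have := Tr_expand hT hg; rewrite /g => <-.
rewrite -[in RHS](hopf_counit_r H a) (lin_sum (lin_comp (bil2 hB phi) S_lin)).
apply: eq_bigr => x _.
transitivity (B (Pi (\sum_(y <- Delta x.2) S y.1 * y.2) phi) (S x.1)).
  rewrite (lin_sum (lin_comp (bil1 hB (S x.1)) (linPi_alg phi))).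
  by apply: eq_bigr => y _; rewrite (rep_mul hPi).
rewrite (hopf_antipode_l H) (linZ (linPi_alg phi)) (rep_one hPi) (linZ (bil1 hB _)).
by rewrite (linZ S_lin) (linZ (bil2 hB _)).
Qed.

End Rep.
End Hopf.

Unset Implicit Arguments.

Theorem lemma4 (A : algType Cx) (Delta : A -> seq (A * A)) (eps : A -> Cx)
  (S : A -> A) (V : lmodType Cx) (Pi : A -> V -> V) (phi : V) :
  is_hopf Delta eps S ->
  (forall a : A, S (S a) = a) ->
  is_representation Pi ->
  (forall b : A, image_set S (T_l Delta Pi phi) b <-> T_r Delta Pi phi b) /\
  (forall b : A, image_set S (T_r Delta Pi phi) b <-> T_l Delta Pi phi b).
Proof.
move=> hH hSS hPi; split=> b; split.
- by case=> a ha <-; eapply Tl_Tr; eassumption.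
- by move=> hb; exists (S b); [eapply Tr_Tl; eassumption | exact: hSS].
- by case=> a ha <-; eapply Tr_Tl; eassumption.
- by move=> hb; exists (S b); [eapply Tl_Tr; eassumption | exact: hSS].
Qed.
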